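(* Consider stochastic momentum gradient descent on a 2-layer diagonal linear network as described in the context, and assume that the iterates $(u_k,v_k)$ converge to $(u_\infty,v_\infty)$, that $\Delta_\infty=|u_\infty^2-v_\infty^2|$ has nonzero coordinates, and that no coordinate of $w_{\pm,k}$ is ever exactly zero. Then the two series $$S_\pm=\frac{1}{1-\beta}\sum_{k=1}^\infty\Big[r\Big(\frac{w_{\pm,k+1}}{w_{\pm,k}}\Big)+\beta\,r\Big(\frac{w_{\pm,k}}{w_{\pm,k+1}}\Big)\Big]$$ converge to finite vectors, where $r(z)=(z-1)-\ln|z|$ for $z\neq0$ (applied coordinate-wise).
   Context: Data $x_1,\dots,x_n\in\mathbb{R}^d$, $y\in\mathbb{R}^n$. For a batch $\mathcal{B}\subset[n]$ of size $B$, $L_{\mathcal B}(\theta)=\frac{1}{2B}\sum_{i\in\mathcal B}(y_i-\langle x_i,\theta\rangle)^2$. Vector operations are coordinate-wise. Stochastic momentum gradient descent with step size $\gamma>0$, momentum $\beta\in[0,1)$ and batches $\mathcal{B}_k\subset[n]$ of size $B\in[n]$ (sampled with or without replacement): $u_{k+1}=u_k-\gamma\nabla L_{\mathcal B_k}(\theta_k)\odot v_k+\beta(u_k-u_{k-1})$, $v_{k+1}=v_k-\gamma\nabla L_{\mathcal B_k}(\theta_k)\odot u_k+\beta(v_k-v_{k-1})$, $\theta_k=u_k\odot v_k$, initialised with $u_1=u_0$, $v_1=v_0$. $w_{\pm,k}=u_k\pm v_k$, $\Delta_k=|u_k^2-v_k^2|$. *)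

(* Defs.v *)
From Stdlib Require Import Reals Lra List.
From Coquelicot Require Import Coquelicot.
Open Scope R_scope.

(* Vectors in R^d are represented as functions nat -> R; only coordinates
   j < d are meaningful.  Samples: x i j is coordinate j of x_i (i < n). *)
Definition vec := nat -> R.

Fixpoint sumk (f : nat -> R) (m : nat) : R :=
  match m with
  | O => 0
  | S m' => sumk f m' + f m'
  end.

Definition inner (d : nat) (a b : vec) : R := sumk (fun j => a j * b j) d.

(* sum over the elements of a batch (a list of indices; repetitions allowed,
   which covers sampling with replacement) *)
Definition sum_list (f : nat -> R) (l : list nat) : R :=
  fold_right (fun i acc => f i + acc) 0 l.

Definition batch_loss (d : nat) (x : nat -> vec) (y : nat -> R)
  (Bt : list nat) (theta : vec) : R :=
  / (2 * INR (length Bt)) *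
  sum_list (fun i => (y i - inner d (x i) theta) ^ 2) Bt.

Definition batch_grad (d : nat) (x : nat -> vec) (y : nat -> R)
  (Bt : list nat) (theta : vec) : vec :=
  fun j => - (/ INR (length Bt)) *
           sum_list (fun i => (y i - inner d (x i) theta) * x i j) Bt.

Definition rfun (z : R) : R := (z - 1) - ln (Rabs z).

(* Main.v *)
Require Import Defs.
From Stdlib Require Import Reals Lra Lia List.
From Coquelicot Require Import Coquelicot.
Open Scope R_scope.

Lemma rfun_nonneg z : 0 < z -> 0 <= rfun z.
Proof.
  intro Hz. unfold rfun. rewrite Rabs_pos_eq by lra.
  pose proof (exp_ineq1_le (ln z)). rewrite exp_ln in H by lra. lra.
Qed.

Lemma ex_series_split (s t : nat -> R) N :
  (forall m, (N <= m)%nat -> 0 <= s m /\ 0 <= t m) ->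
  ex_series (fun m => s m + t m) -> ex_series s.
Proof.
  intros Hp Hs.
  apply (ex_series_incr_n s N).
  apply (@ex_series_le R_AbsRing R_CompleteNormedModule _ (fun k => s (N + k)%nat + t (N + k)%nat)).
  - intro k. destruct (Hp (N + k)%nat) as [H1 H2]; [lia|].
    change (norm (s (N+k)%nat)) with (Rabs (s (N+k)%nat)).
    rewrite Rabs_pos_eq; lra.
  - apply (ex_series_incr_n (fun m => s m + t m) N). exact Hs.
Qed.

Lemma lim_lnabs (a : nat -> R) A : A <> 0 -> is_lim_seq a A ->
  is_lim_seq (fun k => ln (Rabs (a k))) (ln (Rabs A)).
Proof.
  intros HA Ha.
  apply is_lim_seq_continuous.
  - apply continuity_pt_filterlim. apply continuous_ln. apply Rabs_pos_lt. exact HA.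
  - apply (is_lim_seq_abs a A) in Ha. exact Ha.
Qed.

Lemma eventually_pos (a : nat -> R) A : A <> 0 -> is_lim_seq a A ->
  exists N, forall m, (N <= m)%nat -> 0 < a m * A.
Proof.
  intros HA Ha. apply is_lim_seq_spec in Ha.
  assert (He : 0 < Rabs A / 2) by (apply Rabs_pos_lt in HA; lra).
  destruct (Ha (mkposreal _ He)) as [N HN]. exists N. intros m Hm.
  specialize (HN m Hm). simpl in HN.
  destruct (Rle_or_lt 0 A).
  - assert (0 < A) by (destruct H; [exact H| congruence]).
    rewrite (Rabs_pos_eq A) in HN by lra. apply Rabs_def2 in HN. destruct HN. assert (A/2 < a m) by lra. nra.
  - rewrite (Rabs_left A) in HN by lra. apply Rabs_def2 in HN. destruct HN. assert (a m < A/2) by lra. nra.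
Qed.

Section Key.
Variables (a b G : nat -> R) (gamma beta A B : R).
Hypothesis Hbeta : 0 <= beta < 1.
Hypothesis Ha0 : forall k, a k <> 0.
Hypothesis Hb0 : forall k, b k <> 0.
Hypothesis Hra : forall m, a (S (S m)) = a (S m) - gamma * G (S m) * a (S m) + beta * (a (S m) - a m).
Hypothesis Hrb : forall m, b (S (S m)) = b (S m) + gamma * G (S m) * b (S m) + beta * (b (S m) - b m).
Hypothesis HlA : is_lim_seq a A.
Hypothesis HlB : is_lim_seq b B.
Hypothesis HA : A <> 0.
Hypothesis HB : B <> 0.

Definition ta (c : nat -> R) m :=
  / (1 - beta) * (rfun (c (S (S m)) / c (S m)) + beta * rfun (c (S m) / c (S (S m)))).

Definition Phi k := / (1 - beta) * (beta * (a (pred k) / a k + b (pred k) / b k)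
   - (1 - beta) * (ln (Rabs (a k)) + ln (Rabs (b k)))).

Lemma ratio p q r g : q <> 0 -> p = q - g * q + beta * (q - r) ->
  p / q = 1 - g + beta - beta * (r / q).
Proof. intros Hq ->. field. exact Hq. Qed.

Lemma lnd p q : p <> 0 -> q <> 0 -> ln (Rabs (p / q)) = ln (Rabs p) - ln (Rabs q).
Proof.
  intros Hp Hq. rewrite Rabs_div by exact Hq.
  apply ln_div; apply Rabs_pos_lt; assumption.
Qed.

Lemma term_eq m : ta a m + ta b m = Phi (S (S m)) - Phi (S m).
Proof.
  unfold ta, Phi, rfun. simpl pred.
  rewrite !lnd by apply Ha0 || apply Hb0.
  rewrite (ratio (a (S (S m))) (a (S m)) (a m) (gamma * G (S m)) (Ha0 (S m)) (Hra m)).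
  rewrite (ratio (b (S (S m))) (b (S m)) (b m) (- (gamma * G (S m))) (Hb0 (S m))) by (rewrite Hrb; ring).
  ring.
Qed.

Lemma sum_eq N : sum_n (fun m => ta a m + ta b m) N = Phi (S (S N)) - Phi 1.
Proof.
  induction N.
  - rewrite sum_O. apply term_eq.
  - rewrite sum_Sn, IHN. pose proof (term_eq (S N)). change (Phi (S (S N)) - Phi 1 + (ta a (S N) + ta b (S N)) = Phi (S (S (S N))) - Phi 1). lra.
Qed.

Lemma ex_sum : ex_series (fun m => ta a m + ta b m).
Proof.
  exists (/ (1 - beta) * (beta * (A / A + B / B) - (1 - beta) * (ln (Rabs A) + ln (Rabs B))) - Phi 1).
  unfold is_series.
  assert (H : is_lim_seq (sum_n (fun m => ta a m + ta b m))
     (/ (1 - beta) * (beta * (A / A + B / B) - (1 - beta) * (ln (Rabs A) + ln (Rabs B))) - Phi 1)).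
  { apply (is_lim_seq_ext (fun N => Phi (S (S N)) - Phi 1)).
    { intro N. symmetry. apply sum_eq. }
    apply is_lim_seq_minus'; [|apply is_lim_seq_const].
    unfold Phi. simpl pred.
    assert (Ha1 : is_lim_seq (fun n => a (S n)) A) by (apply (is_lim_seq_incr_1 a A); exact HlA).
    assert (Ha2 : is_lim_seq (fun n => a (S (S n))) A) by (apply (is_lim_seq_incr_1 (fun n => a (S n)) A); exact Ha1).
    assert (Hb1 : is_lim_seq (fun n => b (S n)) B) by (apply (is_lim_seq_incr_1 b B); exact HlB).
    assert (Hb2 : is_lim_seq (fun n => b (S (S n))) B) by (apply (is_lim_seq_incr_1 (fun n => b (S n)) B); exact Hb1).
    apply is_lim_seq_mult'; [apply is_lim_seq_const|].
    apply is_lim_seq_minus'.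
    - apply is_lim_seq_mult'; [apply is_lim_seq_const|].
      apply is_lim_seq_plus'; apply is_lim_seq_div'; assumption.
    - apply is_lim_seq_mult'; [apply is_lim_seq_const|].
      apply is_lim_seq_plus'; apply lim_lnabs; assumption. }
  exact H.
Qed.

Lemma ta_nonneg (c : nat -> R) C : C <> 0 -> is_lim_seq c C -> (forall k, c k <> 0) ->
  exists N, forall m, (N <= m)%nat -> 0 <= ta c m.
Proof.
  intros HC Hc Hc0. destruct (eventually_pos c C HC Hc) as [N HN].
  exists N. intros m Hm.
  assert (H1 := HN (S m) ltac:(lia)). assert (H2 := HN (S (S m)) ltac:(lia)).
  assert (Hp : 0 < c (S (S m)) * c (S m)).
  { assert (0 < (c (S (S m)) * C) * (c (S m) * C)) by (apply Rmult_lt_0_compat; assumption).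
    assert (0 < C * C) by (apply Rsqr_pos_lt in HC; unfold Rsqr in HC; exact HC). nra. }
  assert (Hq1 : 0 < c (S (S m)) / c (S m)).
  { replace (c (S (S m)) / c (S m)) with ((c (S (S m)) * c (S m)) / (c (S m) * c (S m))) by (field; apply Hc0).
    apply Rdiv_lt_0_compat; [exact Hp|]. pose proof (Hc0 (S m)). apply Rsqr_pos_lt in H. exact H. }
  assert (Hq2 : 0 < c (S m) / c (S (S m))).
  { replace (c (S m) / c (S (S m))) with ((c (S (S m)) * c (S m)) / (c (S (S m)) * c (S (S m)))) by (field; apply Hc0).
    apply Rdiv_lt_0_compat; [exact Hp|]. pose proof (Hc0 (S (S m))). apply Rsqr_pos_lt in H. exact H. }
  unfold ta. apply Rmult_le_pos.
  - left. apply Rinv_0_lt_compat. lra.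
  - pose proof (rfun_nonneg _ Hq1). pose proof (rfun_nonneg _ Hq2).
    assert (0 <= beta * rfun (c (S m) / c (S (S m)))) by (apply Rmult_le_pos; lra). lra.
Qed.

Lemma key : ex_series (ta a) /\ ex_series (ta b).
Proof.
  destruct (ta_nonneg a A HA HlA Ha0) as [N1 H1].
  destruct (ta_nonneg b B HB HlB Hb0) as [N2 H2].
  split.
  - apply (ex_series_split _ (ta b) (N1 + N2)); [|exact ex_sum].
    intros m Hm. split; [apply H1|apply H2]; lia.
  - apply (ex_series_split _ (ta a) (N1 + N2)).
    + intros m Hm. split; [apply H2|apply H1]; lia.
    + apply (ex_series_ext (fun m => ta a m + ta b m)); [intro n; apply Rplus_comm|exact ex_sum].
Qed.
End Key.

Theorem lemma2
  (n d B : nat) (x : nat -> vec) (y : nat -> R)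
  (gamma beta : R) (Bs : nat -> list nat)
  (u v : nat -> vec) (uinf vinf : vec) :
  0 < gamma -> 0 <= beta < 1 ->
  (1 <= B <= n)%nat ->
  (* batches B_k (k >= 1) of size B drawn from [n] = {0,..,n-1} *)
  (forall k, length (Bs k) = B /\ List.Forall (fun i => (i < n)%nat) (Bs k)) ->
  (* initialisation u_1 = u_0, v_1 = v_0 *)
  (forall j, u 1%nat j = u 0%nat j) ->
  (forall j, v 1%nat j = v 0%nat j) ->
  (* stochastic momentum GD, theta_k = u_k (.) v_k *)
  (forall k j, (1 <= k)%nat ->
     u (S k) j = u k j
       - gamma * batch_grad d x y (Bs k) (fun l => u k l * v k l) j * v k j
       + beta * (u k j - u (k - 1)%nat j)) ->
  (forall k j, (1 <= k)%nat ->
     v (S k) j = v k j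
       - gamma * batch_grad d x y (Bs k) (fun l => u k l * v k l) j * u k j
       + beta * (v k j - v (k - 1)%nat j)) ->
  (* convergence of the iterates *)
  (forall j, (j < d)%nat -> is_lim_seq (fun k => u k j) (uinf j)) ->
  (forall j, (j < d)%nat -> is_lim_seq (fun k => v k j) (vinf j)) ->
  (* Delta_inf has nonzero coordinates *)
  (forall j, (j < d)%nat -> Rabs (uinf j ^ 2 - vinf j ^ 2) <> 0) ->
  (* no coordinate of w_{+,k} = u_k + v_k, w_{-,k} = u_k - v_k is ever zero *)
  (forall k j, (j < d)%nat -> u k j + v k j <> 0 /\ u k j - v k j <> 0) ->
  (* S_+ and S_- converge (coordinatewise) to finite values *)
  forall j, (j < d)%nat ->
    (exists Sp : R, is_series (fun m =>
       let k := S m in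
       / (1 - beta) *
       (rfun ((u (S k) j + v (S k) j) / (u k j + v k j))
        + beta * rfun ((u k j + v k j) / (u (S k) j + v (S k) j)))) Sp)
    /\
    (exists Sm : R, is_series (fun m =>
       let k := S m in
       / (1 - beta) *
       (rfun ((u (S k) j - v (S k) j) / (u k j - v k j))
        + beta * rfun ((u k j - v k j) / (u (S k) j - v (S k) j)))) Sm).
Proof.
  intros Hg Hb HB Hbs Hu1 Hv1 Hu Hv Hlu Hlv HD Hw j Hj.
  set (G := fun k => batch_grad d x y (Bs k) (fun l => u k l * v k l) j).
  set (a := fun k => u k j + v k j).
  set (b := fun k => u k j - v k j).
  assert (HA : uinf j + vinf j <> 0).
  { intro E. apply (HD j Hj). replace (uinf j ^ 2 - vinf j ^ 2) with ((uinf j + vinf j) * (uinf j - vinf j)) by ring.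
    rewrite E, Rmult_0_l. apply Rabs_R0. }
  assert (HBm : uinf j - vinf j <> 0).
  { intro E. apply (HD j Hj). replace (uinf j ^ 2 - vinf j ^ 2) with ((uinf j + vinf j) * (uinf j - vinf j)) by ring.
    rewrite E, Rmult_0_r. apply Rabs_R0. }
  assert (Hra : forall m, a (S (S m)) = a (S m) - gamma * G (S m) * a (S m) + beta * (a (S m) - a m)).
  { intro m. unfold a, G. rewrite (Hu (S m) j), (Hv (S m) j) by lia.
    replace (S m - 1)%nat with m by lia. ring. }
  assert (Hrb : forall m, b (S (S m)) = b (S m) + gamma * G (S m) * b (S m) + beta * (b (S m) - b m)).
  { intro m. unfold b, G. rewrite (Hu (S m) j), (Hv (S m) j) by lia.
    replace (S m - 1)%nat with m by lia. ring. }
  assert (Hla : is_lim_seq a (uinf j + vinf j)) by (apply is_lim_seq_plus'; auto).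
  assert (Hlb : is_lim_seq b (uinf j - vinf j)) by (apply is_lim_seq_minus'; auto).
  destruct (key a b G gamma beta (uinf j + vinf j) (uinf j - vinf j) Hb
     (fun k => proj1 (Hw k j Hj)) (fun k => proj2 (Hw k j Hj)) Hra Hrb Hla Hlb HA HBm) as [[Sp HSp] [Sm HSm]].
  split; [exists Sp; exact HSp | exists Sm; exact HSm].
Qed.
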